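(* For every $t\in\mathbb Q_{\ge0}\cup\{\infty\}$, the word $\omega_t$ is a reduced word which represents the element $\Omega(t)\in\mathfrak F_3$. (For $t=\frac01,\frac10$ this is the convention $\Omega(\frac01)=\omega_{0/1}=x$, $\Omega(\frac10)=\omega_{1/0}=z$.)
   Context: $\mathfrak F_3$ is the free group on $\{x,y,z\}$. Farey tree $\mathrm{F}\mathbb T$: rooted planar binary tree with root $(\frac01,\frac11,\frac10)$, and each vertex $(\frac ab,\frac cd,\frac ef)$ has left child $(\frac ab,\frac{a+c}{b+d},\frac cd)$ and right child $(\frac cd,\frac{c+e}{d+f},\frac ef)$; $\frac10$ represents $\infty$. Every positive rational $t$ occurs as the middle entry of exactly one vertex. Word tree $\mathrm{W}\mathbb T$: rooted planar binary tree with vertices in $\mathfrak F_3^3$, root $(x,y,z)$, and a vertex $(a,b,c)$ has left child $(a,bcb^{-1},b)$ and right child $(b,b^{-1}ab,c)$. $\Omega(t)$ for positive rational $t$: the middle entry of the vertex of $\mathrm{W}\mathbb T$ at the same position (same sequence of left/right moves from the root) as the unique vertex of $\mathrm{F}\mathbb T$ with middle entry $t$; $\Omega(\frac01)=x$, $\Omega(\frac10)=z$. Modified lattice: the planar graph with vertex set $\mathbb Z^2$ whose edges are the horizontal unit segments, the vertical unit segments, and the diagonal segments of slope $-1$ joining $(i,j+1)$ and $(i+1,j)$. Words $\omega_t$: $\omega_{0/1}=x$, $\omega_{1/0}=z$. For reduced $t=p/q\in(0,\infty)$, let $L_t$ be the segment from $(0,0)$ to $(q,p)$, oriented from $(0,0)$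 to $(q,p)$. List the edges whose relative interior meets $L_t$, in the order of the intersection points along $L_t$. A horizontal (resp. diagonal, vertical) edge contributes $x$ (resp. $y$, $z$) if its midpoint is not on the right-hand side of $L_t$ (including lying on $L_t$), and $x^{-1}$ (resp. $y^{-1}$, $z^{-1}$) if its midpoint is on the right-hand side. $\omega_t$ is the concatenation of these letters. *)

(* Defs.v *)
From HB Require Import structures.
From mathcomp Require Import all_boot all_order all_algebra.
Set Implicit Arguments. Unset Strict Implicit. Unset Printing Implicit Defensive.
Import Order.TTheory GRing.Theory Num.Theory.

(* The free group F_3 on {x,y,z}, realised by reduced words.              *)

Inductive gen := gx | gy | gz.

Definition gen_eqb (a b : gen) : bool :=
  match a, b with gx, gx | gy, gy | gz, gz => true | _, _ => false end.
Lemma gen_eqP : Equality.axiom gen_eqb.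
Proof. by case; case; constructor. Qed.
HB.instance Definition _ := hasDecEq.Build gen gen_eqP.

(* a letter: a generator together with an exponent sign (true = +1, false = -1) *)
Definition letter := (gen * bool)%type.
Definition word := seq letter.

Definition inv_letter (l : letter) : letter := (l.1, ~~ l.2).

Fixpoint reduced (w : word) : bool :=
  match w with
  | l1 :: ((l2 :: _) as w') => (l2 != inv_letter l1) && reduced w'
  | _ => true
  end.

Definition push (l : letter) (w : word) : word :=
  match w with
  | l' :: w' => if l' == inv_letter l then w' else l :: w
  | [::] => [:: l]
  end.
Definition freduce (w : word) : word := foldr push [::] w.

Definition fmul (a b : word) : word := freduce (a ++ b).
Definition finv (a : word) : word := rev (map inv_letter a).

Definition X : word := [:: (gx, true)].
Definition Y : word := [:: (gy, true)].
Definition Z : word := [:: (gz, true)].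

(* a fraction a/b is represented by the pair (a, b); (1,0) stands for oo *)
Definition frac := (nat * nat)%type.
Definition ftriple := (frac * frac * frac)%type.

Definition mediant (u v : frac) : frac := (u.1 + v.1, u.2 + v.2).

Definition farey_child (right : bool) (v : ftriple) : ftriple :=
  let: (a, c, e) := v in
  if right then (c, mediant c e, e) else (a, mediant a c, c).

Definition farey_root : ftriple := ((0, 1), (1, 1), (1, 0)).

Definition farey_vertex (path : seq bool) : ftriple :=
  foldl (fun v d => farey_child d v) farey_root path.

Definition wtriple := (word * word * word)%type.

Definition word_child (right : bool) (v : wtriple) : wtriple :=
  let: (a, b, c) := v in
  if right then (b, fmul (finv b) (fmul a b), c)
  else (a, fmul b (fmul c (finv b)), b).

Definition word_root : wtriple := (X, Y, Z).

Definition word_vertex (path : seq bool) : wtriple :=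
  foldl (fun v d => word_child d v) word_root path.

Definition mid3 {T : Type} (v : T * T * T) : T := v.1.2.

(* Omega_rel p q w : "Omega(p/q) = w".  For p/q positive this says that the
   (unique) Farey-tree vertex with middle entry p/q sits at a path where the
   word tree has middle entry w. *)
Definition Omega_rel (p q : nat) (w : word) : Prop :=
  (p = 0%N /\ q = 1%N /\ w = X) \/
  (p = 1%N /\ q = 0%N /\ w = Z) \/
  (0 < p /\ 0 < q /\
   exists path : seq bool,
     let m := mid3 (farey_vertex path) in
     (m.1 * q = m.2 * p)%N /\ w = mid3 (word_vertex path)).

Local Open Scope ring_scope.

Definition pt := (rat * rat)%type.
Definition cross (a b : pt) : rat := a.1 * b.2 - a.2 * b.1.

Inductive ekind := EH | ED | EV.

Definition edge_ends (k : ekind) (i j : int) : pt * pt :=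
  let fi : rat := i%:~R in let fj : rat := j%:~R in
  match k with
  | EH => ((fi, fj), (fi + 1, fj))
  | EV => ((fi, fj), (fi, fj + 1))
  | ED => ((fi, fj + 1), (fi + 1, fj))
  end.

Definition edge_gen (k : ekind) : gen :=
  match k with EH => gx | ED => gy | EV => gz end.

(* If the relative interior of the segment A--B meets L = [(0,0),P], return
   the parameter s in [0,1] of the intersection point s*P along L.
   (For P with both coordinates positive no lattice edge is parallel to L.) *)
Definition cross_param (P : pt) (A B : pt) : option rat :=
  let d := (B.1 - A.1, B.2 - A.2) in
  let den := cross P d in
  if den == 0 then None else
  let s := cross A d / den in
  let u := cross A P / den in
  if [&& 0 < u, u < 1, 0 <= s & s <= 1] then Some s else None.

(* the letter contributed by an edge: positive iff its midpoint is not on the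
   right-hand side of L oriented from (0,0) to P = (q,p) *)
Definition edge_letter (P : pt) (k : ekind) (A B : pt) : letter :=
  let M := ((A.1 + B.1) / 2, (A.2 + B.2) / 2) in
  (edge_gen k, 0 <= cross P M).

(* every edge meeting L has its endpoints in [-1, q+1] x [-1, p+1] *)
Definition shift1 (i : nat) : int := Posz i - 1.
Definition int_range (n : nat) : seq int := map shift1 (iota 0 (n + 3)).

Definition candidate_edges (p q : nat) : seq (ekind * int * int) :=
  flatten [seq [seq (k, i, j) | i <- int_range q, j <- int_range p] | k <- [:: EH; ED; EV]].

Definition crossings (p q : nat) : seq (rat * letter) :=
  let P : pt := ((q%:R : rat), (p%:R : rat)) in
  pmap (fun e : ekind * int * int =>
          let: (k, i, j) := e in
          let: (A, B) := edge_ends k i j in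
          omap (fun s => (s, edge_letter P k A B)) (cross_param P A B))
       (candidate_edges p q).

Definition lattice_word (p q : nat) : word :=
  map snd (sort (fun a b : rat * letter => a.1 <= b.1) (crossings p q)).

Definition omega (p q : nat) : word :=
  if q == 0%N then Z else if p == 0%N then X else lattice_word p q.

(* Main.v *)
From Pilot Require Import Defs.
From mathcomp Require Import all_boot all_order all_algebra.
From mathcomp Require Import zify ring lra.
From HB Require Import structures.
Set Implicit Arguments. Unset Strict Implicit. Unset Printing Implicit Defensive.
Import Order.TTheory GRing.Theory Num.Theory.
Import Pilot.Defs.

Lemma inv_letterK : involutive inv_letter.
Proof. by case=> g b; rewrite /inv_letter /= negbK. Qed.

Lemma inv_letter_neq l : (inv_letter l == l) = false.
Proof. by case: l => g b; rewrite /inv_letter /= xpair_eqE eqxx /=; case: b. Qed.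

Lemma reduced_cons l w :
  reduced (l :: w) = (if w is l2 :: _ then l2 != inv_letter l else true) && reduced w.
Proof. by case: w. Qed.

Lemma push_reduced l w : reduced w -> reduced (push l w).
Proof.
case: w => [|l' w] // H; rewrite /push.
case: ifP => E; first by move: H; rewrite reduced_cons => /andP[].
by rewrite reduced_cons E H.
Qed.

Lemma freduce_reduced w : reduced (freduce w).
Proof. by elim: w => //= l w IH; exact: push_reduced. Qed.

Lemma reduced_freduce w : reduced w -> freduce w = w.
Proof.
elim: w => // l w IH; rewrite reduced_cons => /andP[H1 H2].
rewrite /= IH //; case: w {IH} H1 H2 => // l' w' H1 _.
by rewrite /= (negbTE H1).
Qed.

Lemma pushK l r : reduced r -> push l (push (inv_letter l) r) = r.
Proof.
case: r => [|l' r] H; first by rewrite /= eqxx.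
rewrite /= inv_letterK; case: eqP => [E|ne].
  subst l'; case: r H => [|l2 r] // H; move: H; rewrite reduced_cons => /andP[H _].
  by rewrite /= (negbTE H).
by rewrite /= eqxx.
Qed.

Lemma freduce_cat a b : freduce (a ++ b) = foldr push (freduce b) a.
Proof. by rewrite /freduce foldr_cat. Qed.

Lemma freduce_pair a l b :
  freduce (a ++ l :: inv_letter l :: b) = freduce (a ++ b).
Proof.
rewrite !freduce_cat /=; congr foldr.
by rewrite pushK // freduce_reduced.
Qed.

Lemma freduce_id w : freduce (freduce w) = freduce w.
Proof. exact/reduced_freduce/freduce_reduced. Qed.

Lemma freduce_catr a b : freduce (a ++ freduce b) = freduce (a ++ b).
Proof. by rewrite !freduce_cat freduce_id. Qed.

Lemma freduce_push_cat l r b : reduced r ->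
  freduce (push l r ++ b) = push l (freduce (r ++ b)).
Proof.
case: r => [|l' r] //= H; case: eqP => [->|_] //=.
by rewrite pushK // freduce_reduced.
Qed.

Lemma freduce_catl a b : freduce (freduce a ++ b) = freduce (a ++ b).
Proof.
elim: a => //= l a IH.
by rewrite freduce_push_cat ?freduce_reduced // IH.
Qed.

Lemma finv_cat a b : finv (a ++ b) = finv b ++ finv a.
Proof. by rewrite /finv map_cat rev_cat. Qed.

Lemma finv_cons l w : finv (l :: w) = rcons (finv w) (inv_letter l).
Proof. by rewrite /finv /= rev_cons. Qed.

Lemma finvK : involutive finv.
Proof. by move=> w; rewrite /finv map_rev revK -map_comp (eq_map inv_letterK) map_id. Qed.

Lemma reduced_cat_cons a l b :
  reduced (a ++ l :: b) = reduced (rcons a l) && reduced (l :: b).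
Proof.
elim: a => [|x a IH]; first by case: b.
rewrite cat_cons rcons_cons reduced_cons [reduced (x :: rcons a l)]reduced_cons IH andbA.
by case: a {IH}.
Qed.

Lemma reduced_finv w : reduced w -> reduced (finv w).
Proof.
elim: w => // l w IH; rewrite reduced_cons => /andP[H1 H2].
rewrite finv_cons; case: w H1 H2 IH => [|l2 w] // H1 H2 IH.
rewrite finv_cons -cats1 -[rcons (finv w) _]cats1 -catA /= reduced_cat_cons.
rewrite -finv_cons (IH H2) /= andbT.
apply/negP => /eqP E; move/negP: H1; apply; apply/eqP.
by rewrite E !inv_letterK.
Qed.

Lemma freduce_finv w : freduce (finv w) = finv (freduce w).
Proof.
elim: w => // l w IH.
rewrite finv_cons -cats1 -freduce_catl IH /=.
have Hr := freduce_reduced w.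
case: (freduce w) Hr => [|l' r] Hr /=; first by [].
case: eqP => [E|NE].
  subst l'; rewrite finv_cons -cats1 -catA /= inv_letterK.
  rewrite -[finv r ++ _]cats0 -catA freduce_pair cats0.
  apply: reduced_freduce; apply: reduced_finv.
  by move: Hr; rewrite reduced_cons => /andP[].
rewrite cats1 -finv_cons reduced_freduce //; apply: reduced_finv.
by rewrite reduced_cons Hr andbT; apply/eqP.
Qed.

Definition subst (img : gen -> word) (l : letter) : word :=
  if l.2 then img l.1 else finv (img l.1).
Definition substw img (w : word) : word := flatten (map (subst img) w).
Definition hom img (w : word) : word := freduce (substw img w).

Lemma subst_inv img l : subst img (inv_letter l) = finv (subst img l).
Proof. by case: l => g [] //=; rewrite /subst /= finvK. Qed.

Lemma substw_cat img a b : substw img (a ++ b) = substw img a ++ substw img b.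
Proof. by rewrite /substw map_cat flatten_cat. Qed.

Lemma freduce_cancel a u c : freduce (a ++ u ++ finv u ++ c) = freduce (a ++ c).
Proof.
elim: u a c => [|l u IH] a c //=.
rewrite finv_cons -cats1 -!catA /= -cat_rcons IH.
by rewrite -cats1 -catA /= freduce_pair.
Qed.

Lemma freduce_subst_push img l r : reduced r ->
  freduce (substw img (push l r)) = freduce (substw img (l :: r)).
Proof.
case: r => [|l' r] // _ /=; case: eqP => [->|_] //=.
rewrite /substw /= -/(substw img r) subst_inv.
by rewrite -[subst img l ++ _]cat0s freduce_cancel.
Qed.

Lemma freduce_substw img w : freduce (substw img (freduce w)) = freduce (substw img w).
Proof.
elim: w => // l w IH /=.
rewrite freduce_subst_push ?freduce_reduced //.
rewrite -[l :: freduce w]cat1s substw_cat -freduce_catr IH freduce_catr.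
by rewrite -substw_cat.
Qed.

Lemma substw_finv img w : substw img (finv w) = finv (substw img w).
Proof.
elim: w => // l w IH.
rewrite finv_cons -cats1 substw_cat IH -[l :: w]cat1s substw_cat finv_cat.
by rewrite /substw /= !cats0 subst_inv.
Qed.

Lemma hom_fmul img u v : hom img (fmul u v) = fmul (hom img u) (hom img v).
Proof.
by rewrite /hom /fmul freduce_substw substw_cat freduce_catl freduce_catr.
Qed.

Lemma hom_finv img u : hom img (finv u) = finv (hom img u).
Proof. by rewrite /hom substw_finv freduce_finv. Qed.

Definition map3 (h : word -> word) (t : wtriple) : wtriple :=
  let: (a, b, c) := t in (h a, h b, h c).

Lemma word_child_hom img d t :
  word_child d (map3 (hom img) t) = map3 (hom img) (word_child d t).
Proof.
case: t => [[a b] c]; case: d => /=; by rewrite !hom_fmul !hom_finv.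
Qed.

Lemma foldl_hom img t pi :
  foldl (fun v d => word_child d v) (map3 (hom img) t) pi =
  map3 (hom img) (foldl (fun v d => word_child d v) t pi).
Proof. by elim: pi t => //= d pi IH t; rewrite word_child_hom IH. Qed.

Definition imgR (g : gen) : word :=
  match g with gx => Y | gy => [:: (gy, false); (gx, true); (gy, true)] | gz => Z end.
Definition imgL (g : gen) : word :=
  match g with gx => X | gy => [:: (gy, true); (gz, true); (gy, false)] | gz => Y end.

Lemma word_vertex_R pi :
  word_vertex (true :: pi) = map3 (hom imgR) (word_vertex pi).
Proof.
rewrite /word_vertex /= -foldl_hom; by congr foldl.
Qed.

Lemma word_vertex_L pi :
  word_vertex (false :: pi) = map3 (hom imgL) (word_vertex pi).
Proof.
rewrite /word_vertex /= -foldl_hom; by congr foldl.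
Qed.

Lemma mid3_map3 h t : mid3 (map3 h t) = h (mid3 t).
Proof. by case: t => [[a b] c]. Qed.

Definition fmap3 (f : frac -> frac) (t : ftriple) : ftriple :=
  let: (a, b, c) := t in (f a, f b, f c).
Definition fR (u : frac) : frac := (u.1 + u.2, u.2)%N.
Definition fL (u : frac) : frac := (u.1, u.1 + u.2)%N.

Lemma mediant_fR a b : mediant (fR a) (fR b) = fR (mediant a b).
Proof. by case: a b => [a1 a2] [b1 b2]; rewrite /mediant /fR /=; congr pair; lia. Qed.
Lemma mediant_fL a b : mediant (fL a) (fL b) = fL (mediant a b).
Proof. by case: a b => [a1 a2] [b1 b2]; rewrite /mediant /fL /=; congr pair; lia. Qed.

Lemma foldl_fmap f pi t : (forall a b, mediant (f a) (f b) = f (mediant a b)) ->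
  foldl (fun v d => farey_child d v) (fmap3 f t) pi =
  fmap3 f (foldl (fun v d => farey_child d v) t pi).
Proof.
move=> Hf; elim: pi t => //= d pi IH t; rewrite -IH; congr foldl.
by case: t => [[a b] c]; case: d; rewrite /= Hf.
Qed.

Lemma farey_vertex_R pi :
  farey_vertex (true :: pi) = fmap3 fR (farey_vertex pi).
Proof.
rewrite /farey_vertex -foldl_fmap; last exact: mediant_fR.
by [].
Qed.

Lemma farey_vertex_L pi :
  farey_vertex (false :: pi) = fmap3 fL (farey_vertex pi).
Proof.
rewrite /farey_vertex -foldl_fmap; last exact: mediant_fL.
by [].
Qed.

Lemma mid3_fmap3 f t : mid3 (fmap3 f t) = f (mid3 t).
Proof. by case: t => [[a b] c]. Qed.

Definition ev := (ekind * nat * nat)%type.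
Fixpoint wk (p q f i j : nat) : seq ev :=
  (ED, i, j) :: match f with
   | 0 => [::]
   | f'.+1 => if (j.+1 * q < i.+1 * p)%N then (EH, i, j.+1) :: wk p q f' i j.+1
              else (EV, i.+1, j) :: wk p q f' i.+1 j
   end.
Definition sgn_ev (p q : nat) (e : ev) : bool :=
  let: (k, i, j) := e in
  match k with
  | EH => p * (2 * i + 1) <= q * (2 * j)
  | EV => p * (2 * i) <= q * (2 * j + 1)
  | ED => p * (2 * i + 1) <= q * (2 * j + 1)
  end.
Definition lt_ev p q (e : ev) : letter := (edge_gen e.1.1, sgn_ev p q e).
Definition omw p q := map (lt_ev p q) (wk p q (p + q - 2) 0 0).
Definition cD p q i j := (i * p < j.+1 * q) && (j.+1 * q < i * p + p + q).

Definition yP : letter := (gy, true).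
Definition yM : letter := (gy, false).
Fixpoint trR (w : word) : word := match w with
  | c :: d :: r => (if c.1 is gz then [:: yP; c; yM] else [:: (gy, c.2)]) ++ (gx, d.2) :: trR r
  | _ => [:: yP] end.
Fixpoint trL (w : word) : word := match w with
  | c :: d :: r => (if c.1 is gx then [:: yM; c; yP] else [:: (gy, c.2)]) ++ (gz, d.2) :: trL r
  | _ => [:: yM] end.

Lemma coprime_eq p q a b : coprime p q -> 0 < a -> a * p = b * q -> q <= a.
Proof.
move=> cop a0 E.
have : q %| a * p by rewrite E dvdn_mull.
rewrite Gauss_dvdl; last by rewrite coprime_sym.
by move/dvdn_leq; apply.
Qed.

Lemma wk_head p q f i j : wk p q f i j = (ED, i, j) :: behead (wk p q f i j).
Proof. by case: f. Qed.

Lemma simR p q f i j : 0 < p -> 0 < q -> coprime p q -> cD p q i j ->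
  f + i + j + 2 = p + q ->
  map (lt_ev (p + q) q) (wk (p + q) q (f + (q - 1 - i)) i (i + j + 1)) =
  trR (map (lt_ev p q) (behead (wk p q f i j))).
Proof.
move=> p0 q0 cop; elim: f i j => [|f IH] i j /andP[c1 c2] Hs.
  have iq : i = q - 1 by nia.
  have jp : j = p - 1 by lia.
  subst i j; rewrite (_ : q - 1 - (q - 1) = 0); last by lia.
  rewrite /= /lt_ev /=; congr [:: (_, _)]; apply/idP; nia.
rewrite [wk p q _ i j]/= addSn.
case: ifP => c.
  rewrite [wk (p + q) q _ _ _]/=.
  rewrite (_ : ((i + j + 1).+1 * q < i.+1 * (p + q)) = true); last by apply/idP; lia.
  rewrite (_ : (i + j + 1).+1 = i + j.+1 + 1); last by lia.
  rewrite !map_cons IH; last 2 first.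
  - by apply/andP; split; lia.
  - by lia.
  rewrite (wk_head p q f i j.+1) /=.
  by rewrite /lt_ev /=; congr (_ :: _ :: _); congr (_, _); apply/idP/idP => H; lia.
have iq : i.+1 < q by nia.
have ne : i.+1 * p != j.+1 * q.
  by apply/eqP => /(coprime_eq cop) => /(_ isT); lia.
rewrite (_ : (f + (q - 1 - i)).+1 = (f + (q - 1 - i.+1)).+2); last by lia.
rewrite [wk (p + q) q _.+2 _ _]/=.
rewrite (_ : ((i + j + 1).+1 * q < i.+1 * (p + q)) = false); last by apply/negbTE; lia.
rewrite (_ : ((i + j + 1).+1 * q < i.+2 * (p + q)) = true); last by apply/idP; lia.
rewrite (_ : (i + j + 1).+1 = i.+1 + j + 1); last by lia.
rewrite !map_cons IH; last 2 first.
- by apply/andP; split; lia.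
- by lia.
rewrite (wk_head p q f i.+1 j) /=.
rewrite /lt_ev /=; congr [:: (_, _), (_, _), (_, _), (_, _) & _].
- by apply/idP; lia.
- by apply/idP/idP => H; lia.
- by apply/negbTE; lia.
- by apply/idP/idP => H; lia.
Qed.

Lemma simL p q f i j : 0 < p -> 0 < q -> coprime p q -> cD p q i j ->
  f + i + j + 2 = p + q ->
  map (lt_ev p (p + q)) (wk p (p + q) (f + (p - 1 - j)) (i + j + 1) j) =
  trL (map (lt_ev p q) (behead (wk p q f i j))).
Proof.
move=> p0 q0 cop; elim: f i j => [|f IH] i j /andP[c1 c2] Hs.
  have iq : i = q - 1 by nia.
  have jp : j = p - 1 by lia.
  subst i j; rewrite (_ : p - 1 - (p - 1) = 0); last by lia.
  rewrite /= /lt_ev /=; congr [:: (_, _)]; apply/negbTE; nia.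
rewrite [wk p q _ i j]/= addSn.
case: ifP => c.
  have jp : j.+1 < p by nia.
  rewrite (_ : (f + (p - 1 - j)).+1 = (f + (p - 1 - j.+1)).+2); last by lia.
  rewrite [wk p (p + q) _.+2 _ _]/=.
  rewrite (_ : (j.+1 * (p + q) < (i + j + 1).+1 * p) = true); last by apply/idP; lia.
  rewrite (_ : (j.+2 * (p + q) < (i + j + 1).+1 * p) = false); last by apply/negbTE; lia.
  rewrite (_ : (i + j + 1).+1 = i + j.+1 + 1); last by lia.
  rewrite !map_cons IH; last 2 first.
  - by apply/andP; split; lia.
  - by lia.
  rewrite (wk_head p q f i j.+1) /=.
  rewrite /lt_ev /=; congr [:: (_, _), (_, _), (_, _), (_, _) & _].
  - by apply/negbTE; lia.
  - by apply/idP/idP => H; lia.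
  - by apply/idP; lia.
  - by apply/idP/idP => H; lia.
have iq : i.+1 < q by nia.
have ne : i.+1 * p != j.+1 * q.
  by apply/eqP => /(coprime_eq cop) => /(_ isT); lia.
rewrite [wk p (p + q) _.+1 _ _]/=.
rewrite (_ : (j.+1 * (p + q) < (i + j + 1).+1 * p) = false); last by apply/negbTE; lia.
rewrite (_ : (i + j + 1).+1 = i.+1 + j + 1); last by lia.
rewrite !map_cons IH; last 2 first.
- by apply/andP; split; lia.
- by lia.
rewrite (wk_head p q f i.+1 j) /=.
rewrite /lt_ev /=; congr [:: (_, _), (_, _) & _].
- by apply/idP/idP => H; lia.
- by apply/idP/idP => H; lia.
Qed.

Fixpoint altw (w : word) : bool :=
  match w with
  | [::] => true
  | c :: d :: r => (c.1 != gy) && (d.1 == gy) && altw r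
  | _ => false
  end.

Lemma altw_wk p q f i j : altw (map (lt_ev p q) (behead (wk p q f i j))).
Proof.
elim: f i j => [|f IH] i j //=.
by case: ifP => _; rewrite wk_head /= IH.
Qed.

Lemma omw_head p q : omw p q =
  (gy, sgn_ev p q (ED, 0, 0)) :: map (lt_ev p q) (behead (wk p q (p + q - 2) 0 0)).
Proof. by rewrite /omw wk_head. Qed.

Lemma alt_ind (P : word -> Prop) : P [::] ->
  (forall c d r, c.1 != gy -> d.1 == gy -> P r -> P (c :: d :: r)) ->
  forall t, altw t -> P t.
Proof.
move=> P0 Ps t; move: {2}(size t) (leqnn (size t)) => n.
elim: n t => [|n IH] [|c [|d r]] //= Hn /andP[/andP[H1 H2] Ha].
by apply: Ps => //; apply: IH => //; lia.
Qed.

Lemma reduced_alt s t : altw t -> reduced ((gy, s) :: t).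
Proof.
move=> Ha; suff : forall s, reduced ((gy, s) :: t) by apply.
move: Ha; move: {2}(size t) (leqnn (size t)) => n.
elim: n t => [|n IH] [|c [|d r]] // Hn Ha s'; simpl in Hn, Ha.
move/andP: Ha => [/andP[Hc Hd] Ha].
rewrite reduced_cons reduced_cons.
have -> : reduced (d :: r).
  by move/eqP: Hd; case: d => g b /= ->; apply: IH => //; lia.
rewrite andbT; apply/andP; split.
  by apply/negP => /eqP E; move: Hc; rewrite E.
apply/negP => /eqP E; move/eqP: Hd; rewrite E /=; move: Hc.
by case: (c.1).
Qed.

Lemma reduced_omw p q : reduced (omw p q).
Proof. by rewrite omw_head; apply/reduced_alt/altw_wk. Qed.

Lemma omwR p q : 0 < p -> 0 < q -> coprime p q ->
  omw (p + q) q = yM :: (gx, sgn_ev p q (ED, 0, 0)) ::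
                  trR (map (lt_ev p q) (behead (wk p q (p + q - 2) 0 0))).
Proof.
move=> p0 q0 cop.
have H := @simR p q (p + q - 2) 0 0 p0 q0 cop.
rewrite /cD /= !addn0 !subn0 in H.
rewrite /omw -H; last 2 first.
- by apply/andP; split; lia.
- by lia.
rewrite (_ : p + q + q - 2 = (p + q - 2 + (q - 1)).+1); last by lia.
rewrite /= (_ : (1 * q < 1 * (p + q)) = true); last by apply/idP; lia.
rewrite /lt_ev /=; congr [:: (_, _), (_, _) & _].
- by apply/negbTE; lia.
- by apply/idP/idP => ?; lia.
Qed.

Lemma omwL p q : 0 < p -> 0 < q -> coprime p q ->
  omw p (p + q) = yP :: (gz, sgn_ev p q (ED, 0, 0)) ::
                  trL (map (lt_ev p q) (behead (wk p q (p + q - 2) 0 0))).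
Proof.
move=> p0 q0 cop.
have H := @simL p q (p + q - 2) 0 0 p0 q0 cop.
rewrite /cD /= !addn0 !subn0 in H.
rewrite /omw -H; last 2 first.
- by apply/andP; split; lia.
- by lia.
rewrite (_ : p + (p + q) - 2 = (p + q - 2 + (p - 1)).+1); last by lia.
rewrite /= (_ : (1 * (p + q) < 1 * p) = false); last by apply/negbTE; lia.
rewrite /lt_ev /=; congr [:: (_, _), (_, _) & _].
- by apply/idP; lia.
- by apply/idP/idP => ?; lia.
Qed.

Lemma freduce_pair' a l l' b : l' = inv_letter l ->
  freduce (a ++ l :: l' :: b) = freduce (a ++ b).
Proof. by move=> ->; exact: freduce_pair. Qed.

Lemma redR a t : altw t ->
  freduce (a ++ yP :: substw imgR t) = freduce (a ++ trR t).
Proof.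
move=> Ha; move: a; elim/alt_ind: t / Ha => [|c d r Hc Hd IH] a; first by [].
case: c Hc => [[] e] // _; case: d Hd => [g s] /= /eqP ->.
- have -> : yP :: substw imgR [:: (gx, e), (gy, s) & r] =
     [:: yP; (gy, e); yM; (gx, s)] ++ yP :: substw imgR r by case: e; case: s.
  rewrite catA IH -catA; case: e => /=.
  + by rewrite -cat_rcons freduce_pair' // cat_rcons.
  + by rewrite freduce_pair'.
- have -> : yP :: substw imgR [:: (gz, e), (gy, s) & r] =
     [:: yP; (gz, e); yM; (gx, s)] ++ yP :: substw imgR r by case: e; case: s.
  by rewrite catA IH -catA.
Qed.

Lemma redL a t : altw t ->
  freduce (a ++ yM :: substw imgL t) = freduce (a ++ trL t).
Proof.
move=> Ha; move: a; elim/alt_ind: t / Ha => [|c d r Hc Hd IH] a; first by [].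
case: c Hc => [[] e] // _; case: d Hd => [g s] /= /eqP ->.
- have -> : yM :: substw imgL [:: (gx, e), (gy, s) & r] =
     [:: yM; (gx, e); yP; (gz, s)] ++ yM :: substw imgL r by case: e; case: s.
  by rewrite catA IH -catA.
- have -> : yM :: substw imgL [:: (gz, e), (gy, s) & r] =
     [:: yM; (gy, e); yP; (gz, s)] ++ yM :: substw imgL r by case: e; case: s.
  rewrite catA IH -catA; case: e => /=.
  + by rewrite freduce_pair'.
  + by rewrite -cat_rcons freduce_pair' // cat_rcons.
Qed.

Lemma hom_omwR p q : 0 < p -> 0 < q -> coprime p q ->
  hom imgR (omw p q) = omw (p + q) q.
Proof.
move=> p0 q0 cop; rewrite -(reduced_freduce (reduced_omw (p + q) q)).
rewrite omwR // omw_head /hom.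
set T := map _ _.
have -> : substw imgR ((gy, sgn_ev p q (ED, 0, 0)) :: T) =
   [:: yM; (gx, sgn_ev p q (ED, 0, 0))] ++ yP :: substw imgR T.
  by rewrite /substw /= /subst /=; case: (_ <= _).
by rewrite redR // altw_wk.
Qed.

Lemma hom_omwL p q : 0 < p -> 0 < q -> coprime p q ->
  hom imgL (omw p q) = omw p (p + q).
Proof.
move=> p0 q0 cop; rewrite -(reduced_freduce (reduced_omw p (p + q))).
rewrite omwL // omw_head /hom.
set T := map _ _.
have -> : substw imgL ((gy, sgn_ev p q (ED, 0, 0)) :: T) =
   [:: yP; (gz, sgn_ev p q (ED, 0, 0))] ++ yM :: substw imgL T.
  by rewrite /substw /= /subst /=; case: (_ <= _).
by rewrite redL // altw_wk.
Qed.

Definition ekind_eqb (a b : ekind) : bool :=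
  match a, b with EH, EH | ED, ED | EV, EV => true | _, _ => false end.
Lemma ekind_eqP : Equality.axiom ekind_eqb.
Proof. by case; case; constructor. Qed.
HB.instance Definition _ := hasDecEq.Build ekind ekind_eqP.

Lemma wk_S p q f i j : wk p q f.+1 i j = (ED, i, j) ::
  (if j.+1 * q < i.+1 * p then (EH, i, j.+1) :: wk p q f i j.+1
   else (EV, i.+1, j) :: wk p q f i.+1 j).
Proof. by []. Qed.

Definition good p q (e : ev) : bool :=
  let: (k, i, j) := e in
  match k with
  | ED => cD p q i j && (i + j + 2 <= p + q)
  | EH => [&& i * p < j * q, j * q < i * p + p, 0 < j & j < p]
  | EV => [&& j * q < i * p, i * p < j * q + q, 0 < i & i < q]
  end.

Section Walk.
Variables (p q : nat).
Hypotheses (p0 : 0 < p) (q0 : 0 < q) (cop : coprime p q).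

Lemma cD_uniq i j i' j' : cD p q i j -> cD p q i' j' -> i + j = i' + j' -> i = i'.
Proof. move=> /andP[h1 h2] /andP[h3 h4] e; nia. Qed.

Lemma stepH i j : cD p q i j -> j.+1 * q < i.+1 * p -> cD p q i j.+1.
Proof. by move=> /andP[h1 h2] c; apply/andP; split; lia. Qed.

Lemma stepV i j : cD p q i j -> ~~ (j.+1 * q < i.+1 * p) -> i + j + 2 < p + q ->
  cD p q i.+1 j /\ i.+1 < q.
Proof.
move=> /andP[h1 h2] c hs.
have iq : i.+1 < q by nia.
have ne : i.+1 * p != j.+1 * q.
  by apply/eqP => /(coprime_eq cop) => /(_ isT); lia.
by split => //; apply/andP; split; lia.
Qed.

Lemma good_wk f i j e : cD p q i j -> f + i + j + 2 = p + q ->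
  e \in wk p q f i j -> good p q e.
Proof.
elim: f i j => [|f IH] i j c hs /=.
  by rewrite inE => /eqP ->; rewrite /= c; lia.
rewrite inE => /orP[/eqP -> /=|]; first by rewrite c; lia.
case: ifP => cc; rewrite inE => /orP[/eqP ->|].
- move: c => /andP[h1 h2]; rewrite /good; apply/and4P; split; try lia.
  by nia.
- by apply: IH; [apply: stepH | lia].
- have [c' iq] := stepV c (negbT cc) ltac:(lia).
  move: c' (c) => /andP[h1 h2] /andP[h3 h4]; rewrite /good; apply/and4P; split; lia.
- have [c' iq] := stepV c (negbT cc) ltac:(lia).
  by apply: IH => //; lia.
Qed.

Lemma inW_D f i0 j0 i j : cD p q i0 j0 -> f + i0 + j0 + 2 = p + q ->
  cD p q i j -> i0 + j0 <= i + j -> i + j + 2 <= p + q -> (ED, i, j) \in wk p q f i0 j0.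
Proof.
elim: f i0 j0 => [|f IH] i0 j0 c0 hs c h1 h2.
  have e : i0 + j0 = i + j by lia.
  have ei := cD_uniq c0 c e.
  by rewrite /= inE; apply/eqP; congr (_, _, _); lia.
have [lt|e] : i0 + j0 < i + j \/ i0 + j0 = i + j by lia.
  rewrite wk_S in_cons; apply/orP; right; case: ifP => cc; rewrite in_cons; apply/orP; right.
  - by apply: IH => //; [apply: stepH | lia | lia].
  - have [c' iq] := stepV c0 (negbT cc) ltac:(lia).
    by apply: IH => //; lia.
have ei := cD_uniq c0 c e.
by rewrite /= inE; apply/orP; left; apply/eqP; congr (_, _, _); lia.
Qed.

Lemma inW_H f i0 j0 i j : cD p q i0 j0 -> f + i0 + j0 + 2 = p + q ->
  cD p q i j -> cD p q i j.+1 -> i0 + j0 <= i + j -> i + j + 3 <= p + q ->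
  (EH, i, j.+1) \in wk p q f i0 j0.
Proof.
elim: f i0 j0 => [|f IH] i0 j0 c0 hs c c' h1 h2; first by lia.
have [lt|e] : i0 + j0 < i + j \/ i0 + j0 = i + j by lia.
  rewrite wk_S in_cons; apply/orP; right; case: ifP => cc; rewrite in_cons; apply/orP; right.
  - by apply: IH => //; [apply: stepH | lia | lia].
  - have [c2 iq] := stepV c0 (negbT cc) ltac:(lia).
    by apply: IH => //; lia.
have ei := cD_uniq c0 c e.
have ej : j0 = j by lia.
subst i0 j0.
have cc : j.+1 * q < i.+1 * p by move: c' => /andP[_ h]; lia.
by rewrite /= cc !inE eqxx orbT.
Qed.

Lemma inW_V f i0 j0 i j : cD p q i0 j0 -> f + i0 + j0 + 2 = p + q ->
  cD p q i j -> cD p q i.+1 j -> i0 + j0 <= i + j -> i + j + 3 <= p + q ->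
  (EV, i.+1, j) \in wk p q f i0 j0.
Proof.
elim: f i0 j0 => [|f IH] i0 j0 c0 hs c c' h1 h2; first by lia.
have [lt|e] : i0 + j0 < i + j \/ i0 + j0 = i + j by lia.
  rewrite wk_S in_cons; apply/orP; right; case: ifP => cc; rewrite in_cons; apply/orP; right.
  - by apply: IH => //; [apply: stepH | lia | lia].
  - have [c2 iq] := stepV c0 (negbT cc) ltac:(lia).
    by apply: IH => //; lia.
have ei := cD_uniq c0 c e.
have ej : j0 = j by lia.
subst i0 j0.
have cc : (j.+1 * q < i.+1 * p) = false by move: c' => /andP[h _]; apply/negbTE; lia.
by rewrite /= cc !inE eqxx orbT.
Qed.

Definition Wk := wk p q (p + q - 2) 0 0.

Lemma cD00 : cD p q 0 0.
Proof. by apply/andP; split; lia. Qed.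

Lemma good_W e : e \in Wk -> good p q e.
Proof. by apply: good_wk; [exact: cD00 | lia]. Qed.

Lemma good_inW e : good p q e -> e \in Wk.
Proof.
case: e => [[k i] j]; case: k => /=.
- move=> /and4P[h1 h2 h3 h4].
  have [j' ej] : exists j', j = j'.+1 by exists j.-1; lia.
  subst j; apply: inW_H; try exact: cD00; try lia.
  + by apply/andP; split; lia.
  + by apply/andP; split; lia.
  + nia.
- by move=> /andP[c h]; apply: inW_D => //; try exact: cD00; lia.
- move=> /and4P[h1 h2 h3 h4].
  have [i' ei] : exists i', i = i'.+1 by exists i.-1; lia.
  subst i; apply: inW_V; try exact: cD00; try lia.
  + by apply/andP; split; lia.
  + by apply/andP; split; lia.
  + nia.
Qed.

End Walk.

Section RatPart1.
Local Open Scope ring_scope.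

Definition Fc (p q : nat) := fun e : ekind * int * int =>
          let: (k, i, j) := e in
          let: (A, B) := edge_ends k i j in
          omap (fun s => (s, edge_letter ((q%:R : rat), (p%:R : rat)) k A B))
               (cross_param ((q%:R : rat), (p%:R : rat)) A B).

Lemma crossingsE p q : crossings p q = pmap (Fc p q) (candidate_edges p q).
Proof. by []. Qed.

Lemma cpH p q (i j : int) : (0 < p)%N ->
  Fc p q (EH, i, j) =
  if [&& 0 < j * q%:Z - i * p%:Z, j * q%:Z - i * p%:Z < p%:Z, 0 <= j & j <= p%:Z]
  then Some (j%:~R / p%:R, (gx, 0 <= 2 * j * q%:Z - p%:Z * (2 * i + 1)))
  else None.
Proof.
move=> p0.
rewrite /Fc /edge_ends /cross_param /edge_letter /cross /=.
have p0' : (0 : rat) < p%:R by rewrite ltr0n.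
have pn0 : (p%:R : rat) != 0 by rewrite lt0r_neq0.
have -> : (q%:R * (j%:~R - j%:~R) - p%:R * (i%:~R + 1 - i%:~R) : rat) = - p%:R by ring.
rewrite oppr_eq0 (negbTE pn0).
have EX : ((j * q%:Z - i * p%:Z)%:~R : rat) = j%:~R * q%:R - i%:~R * p%:R.
  by rewrite rmorphB /= !rmorphM.
have -> : ((i%:~R * p%:R - j%:~R * q%:R) / - p%:R : rat) = (j * q%:Z - i * p%:Z)%:~R / p%:R.
  by rewrite EX; field.
have -> : ((i%:~R * (j%:~R - j%:~R) - j%:~R * (i%:~R + 1 - i%:~R)) / - p%:R : rat) = j%:~R / p%:R.
  by field.
set c := [&& _, _, _ & _].
have -> : c = [&& (0 : rat) < (j * q%:Z - i * p%:Z)%:~R / p%:R,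
                  (j * q%:Z - i * p%:Z)%:~R / p%:R < (1 : rat), (0 : rat) <= j%:~R / p%:R
                  & j%:~R / p%:R <= (1 : rat)] by reflexivity.
rewrite ltr_pdivlMr // mul0r ltr0z ltr_pdivrMr // mul1r.
rewrite ler_pdivlMr // mul0r ler0z ler_pdivrMr // mul1r.
rewrite -[p%:R]/((p%:Z)%:~R : rat) ltr_int ler_int.
case: ifP => // _ /=; congr (Some (_, (_, _))).
set E := (q%:R * _ - _).
have EY : ((2 * j * q%:Z - p%:Z * (2 * i + 1))%:~R : rat) = 2 * E.
  rewrite /E !(rmorphB, rmorphD, rmorphM, rmorph1) /=.
  rewrite -[(q%:Z)%:~R]/(q%:R : rat) -[(p%:Z)%:~R]/(p%:R : rat).
  by field.
apply: (@eq_trans _ _ ((0 : rat) <= E)); first reflexivity.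
by rewrite -(ler0z rat) EY pmulr_rge0.
Qed.


Lemma cpV p q (i j : int) : (0 < q)%N ->
  Fc p q (EV, i, j) =
  if [&& 0 < i * p%:Z - j * q%:Z, i * p%:Z - j * q%:Z < q%:Z, 0 <= i & i <= q%:Z]
  then Some (i%:~R / q%:R, (gz, 0 <= q%:Z * (2 * j + 1) - 2 * i * p%:Z))
  else None.
Proof.
move=> q0.
rewrite /Fc /edge_ends /cross_param /edge_letter /cross /=.
have q0' : (0 : rat) < q%:R by rewrite ltr0n.
have qn0 : (q%:R : rat) != 0 by rewrite lt0r_neq0.
have -> : (q%:R * (j%:~R + 1 - j%:~R) - p%:R * (i%:~R - i%:~R) : rat) = q%:R by ring.
rewrite (negbTE qn0).
have EX : ((i * p%:Z - j * q%:Z)%:~R : rat) = i%:~R * p%:R - j%:~R * q%:R.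
  by rewrite rmorphB /= !rmorphM.
rewrite -EX.
have -> : ((i%:~R * (j%:~R + 1 - j%:~R) - j%:~R * (i%:~R - i%:~R)) / q%:R : rat) = i%:~R / q%:R.
  by field.
set c := [&& _, _, _ & _].
have -> : c = [&& (0 : rat) < (i * p%:Z - j * q%:Z)%:~R / q%:R,
                  (i * p%:Z - j * q%:Z)%:~R / q%:R < (1 : rat), (0 : rat) <= i%:~R / q%:R
                  & i%:~R / q%:R <= (1 : rat)] by reflexivity.
rewrite ltr_pdivlMr // mul0r ltr0z ltr_pdivrMr // mul1r.
rewrite ler_pdivlMr // mul0r ler0z ler_pdivrMr // mul1r.
rewrite -[q%:R]/((q%:Z)%:~R : rat) ltr_int ler_int.
case: ifP => // _ /=; congr (Some (_, (_, _))).
set E := (_ * _ - _).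
have EY : ((q%:Z * (2 * j + 1) - 2 * i * p%:Z)%:~R : rat) = 2 * E.
  rewrite /E !(rmorphB, rmorphD, rmorphM, rmorph1) /=.
  rewrite -[(q%:Z)%:~R]/(q%:R : rat) -[(p%:Z)%:~R]/(p%:R : rat).
  by field.
apply: (@eq_trans _ _ ((0 : rat) <= E)); first reflexivity.
by rewrite -(ler0z rat) EY pmulr_rge0.
Qed.

Lemma cpD p q (i j : int) : (0 < p + q)%N ->
  Fc p q (ED, i, j) =
  if [&& 0 < (j + 1) * q%:Z - i * p%:Z, (j + 1) * q%:Z - i * p%:Z < (p + q)%:Z,
         0 <= i + j + 1 & i + j + 1 <= (p + q)%:Z]
  then Some ((i + j + 1)%:~R / (p + q)%:R,
             (gy, 0 <= q%:Z * (2 * j + 1) - p%:Z * (2 * i + 1)))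
  else None.
Proof.
move=> n0.
rewrite /Fc /edge_ends /cross_param /edge_letter /cross /=.
have n0' : (0 : rat) < (p + q)%:R by rewrite ltr0n.
have nn0 : ((p + q)%:R : rat) != 0 by rewrite lt0r_neq0.
have -> : (q%:R * (j%:~R - (j%:~R + 1)) - p%:R * (i%:~R + 1 - i%:~R) : rat) = - (p + q)%:R.
  by rewrite natrD; ring.
rewrite oppr_eq0 (negbTE nn0).
have EX : ((((j + 1) * q%:Z - i * p%:Z))%:~R : rat) = (j%:~R + 1) * q%:R - i%:~R * p%:R.
  by rewrite !(rmorphB, rmorphD, rmorphM, rmorph1).
have -> : ((i%:~R * p%:R - (j%:~R + 1) * q%:R) / - (p + q)%:R : rat)
    = ((j + 1) * q%:Z - i * p%:Z)%:~R / (p + q)%:R.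
  by rewrite EX; field; rewrite -natrD.
have -> : ((i%:~R * (j%:~R - (j%:~R + 1)) - (j%:~R + 1) * (i%:~R + 1 - i%:~R)) / - (p + q)%:R : rat)
    = (i + j + 1)%:~R / (p + q)%:R.
  by rewrite !(rmorphD, rmorph1); field; rewrite -natrD.
set c := [&& _, _, _ & _].
have -> : c = [&& (0 : rat) < ((j + 1) * q%:Z - i * p%:Z)%:~R / (p + q)%:R,
                  ((j + 1) * q%:Z - i * p%:Z)%:~R / (p + q)%:R < (1 : rat),
                  (0 : rat) <= (i + j + 1)%:~R / (p + q)%:R
                  & (i + j + 1)%:~R / (p + q)%:R <= (1 : rat)] by reflexivity.
rewrite ltr_pdivlMr // mul0r ltr0z ltr_pdivrMr // mul1r.
rewrite ler_pdivlMr // mul0r ler0z ler_pdivrMr // mul1r.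
rewrite -[(p + q)%:R]/(((p + q)%:Z)%:~R : rat) ltr_int ler_int.
case: ifP => // _ /=; congr (Some (_, (_, _))).
set E := (_ * _ - _).
have EY : ((q%:Z * (2 * j + 1) - p%:Z * (2 * i + 1))%:~R : rat) = 2 * E.
  rewrite /E !(rmorphB, rmorphD, rmorphM, rmorph1) /=.
  rewrite -[(q%:Z)%:~R]/(q%:R : rat) -[(p%:Z)%:~R]/(p%:R : rat).
  by field.
apply: (@eq_trans _ _ ((0 : rat) <= E)); first reflexivity.
by rewrite -(ler0z rat) EY pmulr_rge0.
Qed.

End RatPart1.

Section RatPart2.
Local Open Scope ring_scope.

Definition time (p q : nat) (e : ev) : rat :=
  let: (k, i, j) := e in
  match k with
  | ED => (i + j + 1)%:R / (p + q)%:R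
  | EH => j%:R / p%:R
  | EV => i%:R / q%:R
  end.
Definition evt p q (e : ev) : rat * letter := (time p q e, lt_ev p q e).
Definition toZ (e : ev) : ekind * int * int := (e.1.1, Posz e.1.2, Posz e.2).

Lemma ltr_frac (a b c d : nat) : (0 < b)%N -> (0 < d)%N ->
  ((a%:R / b%:R : rat) < c%:R / d%:R) = (a * d < c * b)%N.
Proof.
move=> b0 d0.
by rewrite ltr_pdivrMr ?ltr0n // mulrAC ltr_pdivlMr ?ltr0n // -!natrM ltr_nat.
Qed.

Section Bridge.
Variables (p q : nat).
Hypotheses (p0 : (0 < p)%N) (q0 : (0 < q)%N) (cop : coprime p q).

Lemma sorted_wk f i j : cD p q i j -> (f + i + j + 2 = p + q)%N ->
  sorted (fun a b => time p q a < time p q b) (wk p q f i j).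
Proof.
elim: f i j => [|f IH] i j c hs //.
rewrite wk_S; case: ifP => cc.
  have c' := stepH p0 q0 cop c cc.
  have := IH i j.+1 c' ltac:(lia).
  rewrite (wk_head p q f i j.+1) /= => ->; rewrite andbT.
  move: c => /andP[h1 h2].
  by rewrite !ltr_frac //; lia.
have [c' iq] := stepV p0 q0 cop c (negbT cc) ltac:(lia).
have := IH i.+1 j c' ltac:(lia).
rewrite (wk_head p q f i.+1 j) /= => ->; rewrite andbT.
move: c c' => /andP[h1 h2] /andP[h3 h4].
by rewrite !ltr_frac //; lia.
Qed.

Lemma Fc_toZ e : good p q e -> Fc p q (toZ e) = Some (evt p q e).
Proof.
case: e => [[k i] j]; rewrite [toZ _]/=; case: k; rewrite /good.
- move=> /and4P[h1 h2 h3 h4].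
  rewrite cpH //= ifT; last by lia.
  rewrite /evt /lt_ev /=; congr (Some (_, (_, _))).
  by apply/idP/idP => h; lia.
- move=> /andP[/andP[h1 h2] h3].
  rewrite cpD /=; last by lia.
  rewrite ifT; last by lia.
  rewrite /evt /lt_ev /=; congr (Some (_, (_, _))).
  by apply/idP/idP => h; lia.
- move=> /and4P[h1 h2 h3 h4].
  rewrite cpV //= ifT; last by lia.
  rewrite /evt /lt_ev /=; congr (Some (_, (_, _))).
  by apply/idP/idP => h; lia.
Qed.

Lemma nat_of_nonneg (i : int) : (0 <= i)%R -> exists i' : nat, i = Posz i'.
Proof. by case: i => // n _; exists n. Qed.

Lemma Fc_inv e' r : Fc p q e' = Some r -> exists e, good p q e /\ e' = toZ e.
Proof.
case: e' => [[k i] j]; case: k.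
- rewrite cpH //; case: ifP => // /and4P[h1 h2 h3 h4] _.
  have hi : (0 <= i)%R by nia.
  have [i' Ei] := nat_of_nonneg hi; subst i.
  have [j' Ej] := nat_of_nonneg h3; subst j.
  exists (EH, i', j'); split => //=.
  have jp : (j' < p)%N.
    have jle : (j' <= p)%N by lia.
    rewrite ltn_neqAle jle andbT; apply/eqP => E; subst j'.
    have iq : (i' < q)%N by rewrite -(ltn_pmul2r p0); lia.
    have : (i'.+1 * p <= q * p)%N by rewrite leq_pmul2r.
    lia.
  by apply/and4P; split; lia.
- rewrite cpD; last by lia.
  case: ifP => // /and4P[h1 h2 h3 h4] _.
  have hi : (0 <= i)%R by nia.
  have hj : (0 <= j)%R by nia.
  have [i' Ei] := nat_of_nonneg hi; subst i.
  have [j' Ej] := nat_of_nonneg hj; subst j.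
  exists (ED, i', j'); split => //=.
  have hn : (i' + j' + 2 <= p + q)%N.
    suff hne : (i' + j' + 1)%N != (p + q)%N by lia.
    apply/eqP => E.
    have Eq : ((i' + j' + 1) * q = (p + q) * q)%N by rewrite E.
    have A : (i' * (p + q) < q * (p + q))%N by lia.
    have iq : (i' < q)%N by rewrite -(ltn_pmul2r (_ : (0 < p + q)%N)) //; lia.
    have : (i'.+1 * (p + q) <= q * (p + q))%N by rewrite leq_pmul2r //; lia.
    lia.
  by rewrite hn andbT; apply/andP; split; lia.
- rewrite cpV //; case: ifP => // /and4P[h1 h2 h3 h4] _.
  have hj : (0 <= j)%R by nia.
  have [i' Ei] := nat_of_nonneg h3; subst i.
  have [j' Ej] := nat_of_nonneg hj; subst j.
  exists (EV, i', j'); split => //=.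
  have ip : (0 < i')%N.
    rewrite lt0n; apply/eqP => E; subst i'; lia.
  have iq : (i' < q)%N.
    have ile : (i' <= q)%N by lia.
    rewrite ltn_neqAle ile andbT; apply/eqP => E; subst i'.
    have jp : (j' < p)%N by rewrite -(ltn_pmul2r q0); lia.
    have : (j'.+1 * q <= p * q)%N by rewrite leq_pmul2r.
    lia.
  by apply/and4P; split; lia.
Qed.

End Bridge.

End RatPart2.

Lemma mem_int_range (n i : nat) : (i <= n + 1)%N -> Posz i \in int_range n.
Proof.
move=> h; apply/mapP; exists i.+1; first by rewrite mem_iota; lia.
by rewrite /shift1; lia.
Qed.

Lemma int_range_uniq n : uniq (int_range n).
Proof.
rewrite /int_range map_inj_uniq ?iota_uniq //.
by move=> a b; rewrite /shift1 => E; lia.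
Qed.

Lemma cand_block_uniq (k : ekind) (s t : seq int) : uniq s -> uniq t ->
  uniq [seq (k, i, j) | i <- s, j <- t].
Proof.
move=> us ut; apply: allpairs_uniq => // [[a b] [c d]] _ _ /= [-> ->] //.
Qed.

Lemma cand_block_kind (k : ekind) (s t : seq int) x : x \in [seq (k, i, j) | i <- s, j <- t] -> x.1.1 = k.
Proof. by case/allpairsP => [[a b] [_ _ ->]]. Qed.

Lemma cand_uniq p q : uniq (candidate_edges p q).
Proof.
rewrite /candidate_edges /= cats0 !cat_uniq !cand_block_uniq ?int_range_uniq //=.
rewrite !andbT; apply/andP; split; last first.
  by apply/hasPn => x /cand_block_kind ex; apply/negP => /cand_block_kind; rewrite ex.
apply/hasPn => x; rewrite mem_cat => /orP[] /cand_block_kind ex;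
  by apply/negP => /cand_block_kind; rewrite ex.
Qed.

Lemma pmap_uniq_in (aT rT : eqType) (f : aT -> option rT) s : uniq s ->
  {in s &, forall x y r, f x = Some r -> f y = Some r -> x = y} -> uniq (pmap f s).
Proof.
elim: s => //= x s IH /andP[xs us] inj.
have inj' : {in s &, forall x y r, f x = Some r -> f y = Some r -> x = y}.
  by move=> a b ha hb; apply: inj; rewrite inE ?ha ?hb orbT.
case E: (f x) => [r|] /=; last exact: IH.
rewrite IH // andbT; apply/negP; rewrite mem_pmap => /mapP [y ys Ey].
have ys' : y \in x :: s by rewrite inE ys orbT.
have xy : x = y := inj x y (mem_head x s) ys' r E (esym Ey).
by move: xs; rewrite xy ys.
Qed.

Lemma sorted_key_inj (T : eqType) (key : T -> rat) s :
  sorted (fun a b => (key a < key b)%R) s -> {in s &, injective key}.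
Proof.
elim: s => // a s IH /= hp.
have := hp; rewrite path_sortedE; last by move=> y x z; apply: lt_trans.
move=> /andP[/allP ha hs] x y; rewrite !inE => /orP[/eqP ->|xs] /orP[/eqP ->|ys] //.
- by move=> E; have := ha y ys; rewrite E ltxx.
- by move=> E; have := ha x xs; rewrite E ltxx.
- exact: IH.
Qed.

Section Final.
Variables (p q : nat).
Hypotheses (p0 : (0 < p)%N) (q0 : (0 < q)%N) (cop : coprime p q).

Lemma cand_mem e : good p q e -> toZ e \in candidate_edges p q.
Proof.
case: e => [[k i] j]; rewrite /good /toZ /candidate_edges /= !mem_cat; case: k.
- move=> /and4P[h1 h2 h3 h4].
  have : (j * q <= p * q)%N by rewrite leq_pmul2r //; lia.
  move=> h5; have iq : (i < q)%N by rewrite -(ltn_pmul2r p0); lia.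
  by rewrite allpairs_f ?mem_int_range //; lia.
- move=> /andP[/andP[h1 h2] h3].
  have h5 : ((i + j + 1) * q <= (p + q) * q)%N by rewrite leq_pmul2r //; lia.
  have iq : (i < q)%N.
    by rewrite -(ltn_pmul2r (_ : (0 < p + q)%N)) //; lia.
  have h6 : ((i + j + 2) * p <= (p + q) * p)%N by rewrite leq_pmul2r //; lia.
  have jp : (j < p)%N.
    by rewrite -(ltn_pmul2r (_ : (0 < p + q)%N)) //; lia.
  by rewrite allpairs_f ?orbT ?mem_int_range //; lia.
- move=> /and4P[h1 h2 h3 h4].
  have : (i * p <= q * p)%N by rewrite leq_pmul2r //; lia.
  move=> h5; have jp : (j < p)%N by rewrite -(ltn_pmul2r q0); lia.
  by rewrite allpairs_f ?orbT ?mem_int_range //; lia.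
Qed.

Lemma bridge : lattice_word p q = omw p q.
Proof.
have hW : sorted (fun a b => (time p q a < time p q b)%R) (Wk p q).
  by apply: sorted_wk => //; [exact: cD00 | lia].
set s2 := map (evt p q) (Wk p q).
have hs2 : sorted (fun a b : rat * letter => (a.1 < b.1)%R) s2 by rewrite /s2 sorted_map.
have kinj : {in s2 &, injective fst} := sorted_key_inj hs2.
have winj : {in Wk p q &, injective (time p q)} := sorted_key_inj hW.
have u2 : uniq s2.
  by apply: (sorted_uniq _ _ hs2) => [y x z|x]; [apply: lt_trans | apply: ltxx].
have memE : crossings p q =i s2.
  move=> x; rewrite crossingsE mem_pmap; apply/mapP/mapP.
  - case=> e' he' hF; have [e [ge E]] := Fc_inv p0 q0 cop (esym hF); subst e'.
    rewrite Fc_toZ // in hF; case: hF => ->.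
    by exists e => //; apply: good_inW.
  - case=> e he ->; exists (toZ e); first exact/cand_mem/good_W.
    by rewrite Fc_toZ //; apply: good_W.
have u1 : uniq (crossings p q).
  rewrite crossingsE; apply: pmap_uniq_in; first exact: cand_uniq.
  move=> x y _ _ r hx hy.
  have [e1 [g1 E1]] := Fc_inv p0 q0 cop hx; subst x.
  have [e2 [g2 E2]] := Fc_inv p0 q0 cop hy; subst y.
  rewrite Fc_toZ // in hx; rewrite Fc_toZ // in hy.
  have E : evt p q e1 = evt p q e2 by rewrite (Some_inj hx) (Some_inj hy).
  congr toZ; apply: winj; rewrite ?good_inW //.
  by have := congr1 fst E.
have perm : perm_eq (crossings p q) s2 by apply: uniq_perm.
rewrite /lattice_word /omw.
transitivity (map snd s2); last by rewrite /s2 -map_comp.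
congr (map snd _).
apply: (@eq_trans _ _ (sort _ s2)).
  apply/perm_sort_inP => //.
  - by move=> a b _ _; exact: le_total.
  - by move=> b a c _ _ _; exact: le_trans.
  - move=> a b ha hb /andP[h1 h2]; apply: kinj; rewrite -?memE //.
    exact: le_anti (introT andP (conj h1 h2)).
apply: sorted_sort; first by move=> b a c; exact: le_trans.
by apply: sub_sorted hs2 => a b; exact: ltW.
Qed.

End Final.

Lemma coprime_addl a b : coprime (a + b) b = coprime a b.
Proof. by rewrite /coprime gcdnC gcdnDr gcdnC. Qed.
Lemma coprime_addr a b : coprime a (a + b) = coprime a b.
Proof. by rewrite /coprime gcdnDl. Qed.

Lemma core p q : 0 < p -> 0 < q -> coprime p q ->
  exists pi : seq bool, let m := mid3 (farey_vertex pi) in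
    (m.1 * q = m.2 * p)%N /\ omw p q = mid3 (word_vertex pi).
Proof.
move: {2}(p + q) (leqnn (p + q)) => n.
elim: n p q => [|n IH] p q Hn p0 q0 cop; first by lia.
case: (ltngtP p q) => [pq|qp|epq].
- have [r Er] : exists r, q = p + r by exists (q - p); rewrite subnKC // ltnW.
  subst q; have r0 : 0 < r by rewrite -(ltn_add2l p) addn0.
  have cop' : coprime p r by rewrite -coprime_addr.
  have [pi [Hm Hw]] := IH p r ltac:(lia) p0 r0 cop'.
  exists (false :: pi); rewrite farey_vertex_L mid3_fmap3 word_vertex_L mid3_map3.
  move: Hm; case: (mid3 _) => m1 m2 /= Hm; split.
    by rewrite mulnDr Hm mulnDl.
  by rewrite -Hw hom_omwL.
- have [r Er] : exists r, p = q + r by exists (p - q); rewrite subnKC // ltnW.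
  subst p; have r0 : 0 < r by rewrite -(ltn_add2l q) addn0.
  have cop' : coprime r q by rewrite -coprime_addl addnC.
  have [pi [Hm Hw]] := IH r q ltac:(lia) r0 q0 cop'.
  exists (true :: pi); rewrite farey_vertex_R mid3_fmap3 word_vertex_R mid3_map3.
  move: Hm; case: (mid3 _) => m1 m2 /= Hm; split.
    by rewrite mulnDl Hm -mulnDr addnC.
  by rewrite -Hw hom_omwR // addnC.
- subst q; move: cop; rewrite /coprime gcdnn => /eqP p1; subst p.
  by exists [::].
Qed.



Theorem corollary3p7 (p q : nat) :
  coprime p q ->
  reduced (omega p q) /\ Omega_rel p q (freduce (omega p q)).
Proof.
move=> cop; rewrite /omega.
case: eqP => [q0|/eqP qn0].
  subst q; move: cop; rewrite /coprime gcdn0 => /eqP ->.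
  by split => //; right; left.
case: eqP => [p0|/eqP pn0].
  subst p; move: cop; rewrite /coprime gcd0n => /eqP ->.
  by split => //; left.
have p0 : 0 < p by lia.
have q0 : 0 < q by lia.
rewrite bridge // (reduced_freduce (reduced_omw p q)); split; first exact: reduced_omw.
right; right; split => //; split => //.
exact: core.
Qed.
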